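(* Let $V$ be a finite-dimensional real vector space with a linear action of the quaternion algebra $\mathbb H$, and $\Lambda\subset V$ a lattice of maximal rank. Then for all complex structures $L\in\mathbb H$ (i.e. $L^2=-1$) except for at most countably many, the following holds: every rational $L$-invariant subspace $W\subset V$ is $\mathbb H$-invariant.
   Context: A real subspace $W\subset V$ is rational if $\Lambda\cap W$ is a lattice of maximal rank in $W$. The elements $L\in\mathbb H$ with $L^2=-1$ are $L=aI+bJ+cK$ with $a^2+b^2+c^2=1$. *)

(* Defs.v *)
From HB Require Import structures.
From mathcomp Require Import all_boot all_order all_algebra.
From mathcomp Require Import boolp classical_sets cardinality reals.
Set Implicit Arguments. Unset Strict Implicit. Unset Printing Implicit Defensive.
Import Order.TTheory GRing.Theory Num.Theory.
Local Open Scope ring_scope.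

(* V = 'rV[R]_n (row vectors); linear maps act on the right: v |-> v *m A. *)

(* A linear action of the quaternions on V: images I, J of the units i, j
   with I^2 = J^2 = -1 and IJ = -JI; the image of k is K = I*J. *)
Definition quat_action (R : realType) (n : nat) (I J : 'M[R]_n) : Prop :=
  I *m I = - 1%:M /\ J *m J = - 1%:M /\ I *m J = - (J *m I).

Definition quatK (R : realType) (n : nat) (I J : 'M[R]_n) : 'M[R]_n := I *m J.

Definition quat_elt (R : realType) (n : nat) (I J : 'M[R]_n) (a b c : R) : 'M[R]_n :=
  a *: I + b *: J + c *: quatK I J.

Definition in_lattice (R : realType) (n : nat) (B : 'M[R]_n) (v : 'rV[R]_n) : Prop :=
  exists z : 'rV[int]_n, v = map_mx (fun k : int => k%:~R) z *m B.

(* Lambda is a lattice of maximal rank iff its basis matrix is invertible. *)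
Definition full_lattice (R : realType) (n : nat) (B : 'M[R]_n) : Prop :=
  B \in unitmx.

(* A subspace W (row space of a matrix) is rational w.r.t. Lambda if
   Lambda ∩ W is a lattice of maximal rank in W, i.e. W is spanned by
   vectors of Lambda lying in W. *)
Definition rational_subspace (R : realType) (n : nat) (B : 'M[R]_n) (W : 'M[R]_n) : Prop :=
  exists (m : nat) (A : 'M[R]_(m, n)),
    (forall i, in_lattice B (row i A)) /\ (A <= W)%MS /\ (W <= A)%MS.

Definition mx_invariant (R : realType) (n : nat) (W f : 'M[R]_n) : Prop :=
  (W *m f <= W)%MS.

(* Main.v *)
Require Import Defs.
From HB Require Import structures.
From mathcomp Require Import all_boot all_order all_algebra.
From mathcomp Require Import boolp classical_sets cardinality reals.
Import Order.TTheory GRing.Theory Num.Theory.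
Local Open Scope ring_scope.
Local Open Scope classical_set_scope.



From mathcomp Require Import ring lra.

Local Open Scope ring_scope.
Set Implicit Arguments. Unset Strict Implicit.

Section Alg.
Variables (R : realType) (n : nat) (I J : 'M[R]_n).
Hypothesis hq : quat_action I J.
Let K := quatK I J.

Definition q (d x y z : R) : 'M[R]_n := d *: 1%:M + x *: I + y *: J + z *: K.

Lemma rel_II : I *m I = - 1%:M. Proof. by case: hq. Qed.
Lemma rel_JJ : J *m J = - 1%:M. Proof. by case: hq => _ []. Qed.
Lemma rel_IJ : I *m J = K. Proof. by []. Qed.
Lemma rel_JI : J *m I = - K. Proof. by case: hq => _ [] _ h; rewrite /K /quatK h opprK. Qed.
Lemma rel_IK : I *m K = - J.
Proof. by rewrite /K /quatK mulmxA rel_II mulNmx mul1mx. Qed.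
Lemma rel_KI : K *m I = J.
Proof. by rewrite /K /quatK -mulmxA rel_JI mulmxN rel_IK opprK. Qed.
Lemma rel_KJ : K *m J = - I.
Proof. by rewrite /K /quatK -mulmxA rel_JJ mulmxN mulmx1. Qed.
Lemma rel_JK : J *m K = I.
Proof. by rewrite {1}/K /quatK mulmxA rel_JI mulNmx rel_KJ opprK. Qed.
Lemma rel_KK : K *m K = - 1%:M.
Proof. by rewrite {1}/K /quatK -mulmxA rel_JK rel_II. Qed.

Lemma qM d x y z d' x' y' z' :
  q d x y z *m q d' x' y' z' =
  q (d*d' - x*x' - y*y' - z*z') (d*x' + x*d' + y*z' - z*y')
    (d*y' - x*z' + y*d' + z*x') (d*z' + x*y' - y*x' + z*d').
Proof.
rewrite /q !mulmxDl !mulmxDr -!scalemxAl -!scalemxAr.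
rewrite !mul1mx !mulmx1 rel_II rel_JJ rel_KK rel_JI rel_IK rel_KI rel_JK rel_KJ.
change (I *m J) with K; move: (1%:M : 'M[R]_n) I J K => E A B C.
apply/matrixP => i j; rewrite !mxE; ring.
Qed.

Lemma qD d x y z d' x' y' z' :
  q d x y z + q d' x' y' z' = q (d + d') (x + x') (y + y') (z + z').
Proof.
rewrite /q; move: (1%:M : 'M[R]_n) I J K => E A B C.
apply/matrixP => i j; rewrite !mxE; ring.
Qed.

Lemma qZ a d x y z : a *: q d x y z = q (a * d) (a * x) (a * y) (a * z).
Proof.
rewrite /q; move: (1%:M : 'M[R]_n) I J K => E A B C.
apply/matrixP => i j; rewrite !mxE; ring.
Qed.

Lemma qI : q 0 1 0 0 = I.
Proof. rewrite /q; move: (1%:M : 'M[R]_n) I J K => E A B C.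
apply/matrixP => i j; rewrite !mxE; ring. Qed.
Lemma qJ : q 0 0 1 0 = J.
Proof. rewrite /q; move: (1%:M : 'M[R]_n) I J K => E A B C.
apply/matrixP => i j; rewrite !mxE; ring. Qed.
Lemma qK : q 0 0 0 1 = K.
Proof. rewrite /q; move: (1%:M : 'M[R]_n) I J K => E A B C.
apply/matrixP => i j; rewrite !mxE; ring. Qed.
Lemma q1 : q 1 0 0 0 = 1%:M.
Proof. rewrite /q; move: (1%:M : 'M[R]_n) I J K => E A B C.
apply/matrixP => i j; rewrite !mxE; ring. Qed.
Lemma qL a b c : q 0 a b c = quat_elt I J a b c.
Proof. rewrite /q /quat_elt -/K; move: (1%:M : 'M[R]_n) I J K => E A B C.
apply/matrixP => i j; rewrite !mxE; ring. Qed.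

Section Inv.
Variable m : nat.
Variable W : 'M[R]_(m, n).
Definition inv (f : 'M[R]_n) := (W *m f <= W)%MS.
Lemma invD f g : inv f -> inv g -> inv (f + g).
Proof. by rewrite /inv mulmxDr => h1 h2; apply: addmx_sub. Qed.
Lemma invZ a f : inv f -> inv (a *: f).
Proof. by rewrite /inv -scalemxAr => h; apply: scalemx_sub. Qed.
Lemma invM f g : inv f -> inv g -> inv (f *m g).
Proof. rewrite /inv mulmxA => h1 h2; apply: submx_trans h2; exact: submxMr. Qed.
Lemma inv1 : inv 1%:M.
Proof. by rewrite /inv mulmx1. Qed.
Lemma inv_q d x y z d' x' y' z' : inv (q d x y z) ->
  d = d' -> x = x' -> y = y' -> z = z' -> inv (q d' x' y' z').
Proof. by move=> h <- <- <- <-. Qed.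

Lemma key a b c a' b' c' :
  a ^+ 2 + b ^+ 2 + c ^+ 2 = 1 -> a' ^+ 2 + b' ^+ 2 + c' ^+ 2 = 1 ->
  inv (q 0 a b c) -> inv (q 0 a' b' c') -> ~ (inv I /\ inv J /\ inv K) ->
  (a', b', c') = (a, b, c) \/ (a', b', c') = (-a, -b, -c).
Proof.
move=> hr hr' hL hL' hn.
set w1 := b * c' - c * b'; set w2 := c * a' - a * c'; set w3 := a * b' - b * a'.
set s := w1 ^+ 2 + w2 ^+ 2 + w3 ^+ 2.
have [s0|sn0] := eqVneq s 0.
  have g1 := sqr_ge0 w1; have g2 := sqr_ge0 w2; have g3 := sqr_ge0 w3.
  have e1 : w1 = 0 by apply/eqP; rewrite -sqrf_eq0; apply/eqP; rewrite /s in s0; lra.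
  have e2 : w2 = 0 by apply/eqP; rewrite -sqrf_eq0; apply/eqP; rewrite /s in s0; lra.
  have e3 : w3 = 0 by apply/eqP; rewrite -sqrf_eq0; apply/eqP; rewrite /s in s0; lra.
  set k := a * a' + b * b' + c * c'.
  have ea : a' = k * a.
    have : k * a - a' * (a ^+ 2 + b ^+ 2 + c ^+ 2) = b * w3 - c * w2.
      by rewrite /k /w3 /w2; ring.
    by rewrite hr e2 e3 mulr1 !mulr0 subr0 => /eqP; rewrite subr_eq0 => /eqP.
  have eb : b' = k * b.
    have : k * b - b' * (a ^+ 2 + b ^+ 2 + c ^+ 2) = c * w1 - a * w3.
      by rewrite /k /w3 /w1; ring.
    by rewrite hr e1 e3 mulr1 !mulr0 subr0 => /eqP; rewrite subr_eq0 => /eqP.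
  have ec : c' = k * c.
    have : k * c - c' * (a ^+ 2 + b ^+ 2 + c ^+ 2) = a * w2 - b * w1.
      by rewrite /k /w2 /w1; ring.
    by rewrite hr e1 e2 mulr1 !mulr0 subr0 => /eqP; rewrite subr_eq0 => /eqP.
  have k2 : k ^+ 2 = 1.
    have : k ^+ 2 * (a ^+ 2 + b ^+ 2 + c ^+ 2) = a' ^+ 2 + b' ^+ 2 + c' ^+ 2.
      by rewrite ea eb ec; ring.
    by rewrite hr hr' mulr1.
  move/eqP: k2; rewrite sqrf_eq1 => /orP [] /eqP kE.
    by left; rewrite ea eb ec kE !mul1r.
  by right; rewrite ea eb ec kE !mulN1r.
exfalso; apply: hn.
have r0 : a ^+ 2 + b ^+ 2 + c ^+ 2 != 0 by rewrite hr oner_eq0.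
have H1 := invM hL hL'; rewrite qM in H1.
have H2 : inv (q 0 w1 w2 w3).
  have := invD H1 (invZ (a * a' + b * b' + c * c') inv1).
  rewrite -q1 qZ qD => h; apply: (inv_q h); rewrite /w1 /w2 /w3; ring.
have H3 := invM hL H2; rewrite qM in H3.
set z1 := b * w3 - c * w2; set z2 := c * w1 - a * w3; set z3 := a * w2 - b * w1.
set r := a ^+ 2 + b ^+ 2 + c ^+ 2.
have gen : forall e1 e2 e3, inv (q 0 e1 e2 e3).
  move=> e1 e2 e3.
  have := invD (invD (invZ ((e1 * a + e2 * b + e3 * c) / r) hL)
     (invZ ((e1 * w1 + e2 * w2 + e3 * w3) / s) H2))
     (invZ ((e1 * z1 + e2 * z2 + e3 * z3) / (r * s)) H3).
  rewrite !qZ !qD => h; apply: (inv_q h);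
  move: sn0 r0; rewrite /r /s /z1 /z2 /z3 /w1 /w2 /w3 => sn0 r0; field; rewrite ?sn0 ?r0 //.
by rewrite -qI -qJ -qK; split; [|split]; apply: gen.
Qed.
End Inv.
End Alg.

Theorem lemma3p3 (R : realType) (n : nat) (I J B : 'M[R]_n) :
  quat_action I J -> full_lattice B ->
  countable [set abc : R * R * R |
    let: (a, b, c) := abc in
    a ^+ 2 + b ^+ 2 + c ^+ 2 = 1 /\
    ~ (forall W : 'M[R]_n,
         rational_subspace B W -> mx_invariant W (quat_elt I J a b c) ->
         mx_invariant W I /\ mx_invariant W J /\ mx_invariant W (quatK I J))].
Proof.
move=> hq _.
pose T := {m : nat & 'M[int]_(m, n)}.
pose At (t : T) : 'M[R]_(tag t, n) := map_mx (fun k : int => k%:~R) (tagged t) *m B.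
pose F (t : T) := [set abc : R * R * R | let: (a, b, c) := abc in
   a ^+ 2 + b ^+ 2 + c ^+ 2 = 1 /\ inv (At t) (q I J 0 a b c) /\
   ~ (inv (At t) I /\ inv (At t) J /\ inv (At t) (quatK I J))].
apply: (@sub_countable _ _ _ (\bigcup_(t in setT) F t)).
  apply: subset_card_le => -[[a b] c] /= [hr hbad].
  have [W [hW [hLW hn]]] : exists W, rational_subspace B W /\
      mx_invariant W (quat_elt I J a b c) /\
      ~ (mx_invariant W I /\ mx_invariant W J /\ mx_invariant W (quatK I J)).
    apply: contrapT => hne; apply: hbad => W hW hL; apply: contrapT => hnot.
    by apply: hne; exists W.
  case: hW => m [A0 [hrows [hAW hWA]]].
  have [f hf] := choice hrows.
  pose z : 'M[int]_(m, n) := \matrix_i f i.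
  have eA : A0 = At (existT _ m z).
    apply/row_matrixP => i; rewrite /At /= row_mul -map_row rowK.
    exact: hf.
  have e : (W :=: A0)%MS by apply/eqmxP/andP; split.
  have tr : forall g, mx_invariant W g <-> inv A0 g.
    by move=> g; rewrite /mx_invariant /inv (eqmxMr g e) e.
  exists (existT _ m z) => //=.
  rewrite /F /= -eA; split; first exact: hr.
  split; first by rewrite qL //; apply/tr.
  by rewrite -!tr.
apply: bigcup_countable; first exact: (countableP (T := {m : nat & 'M[int]_(m, n)})).
move=> t _.
have [[[[pa pb] pc] Fp]|F0] := pselect (exists p, F t p); last first.
  apply: (@sub_countable _ _ _ set0) => //; apply: subset_card_le => p Fp.
  by apply: F0; exists p.
apply: (@sub_countable _ _ _ ([set (pa, pb, pc)] `|` [set (- pa, - pb, - pc)])).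
  apply: subset_card_le => -[[a b] c] /= [hr [hL hn]].
  case: Fp => hr0 [hL0 hn0].
  by case: (key hq hr0 hr hL0 hL hn) => ->; [left|right].
by apply: finite_set_countable; rewrite finite_setU; split; apply: finite_set1.
Qed.
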